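(* Let $f:\mathbb{R}^n\to\mathbb{R}$ be convex and differentiable with $\nabla f$ $L$-Lipschitz continuous, and assume its minimizer set $X^*$ is non-empty. Let $\{x^k\},\{z^k\},\{h_k\}$ be generated by Algorithm 3 with $0\le\beta\le1$, and set $d^k:=h_k\big(\nabla f(x^k)-\beta(\nabla f(x^k)-\nabla f(z^k))\big)$. Then for every $x^*\in X^*$ and every $k$, $$\langle x^k-x^*,d^k\rangle\ge(1-\beta)\Big(1-\frac{Lh_k}{4}\Big)\|x^k-z^k\|^2+\beta\langle x^k-z^k,h_k\nabla f(z^k)\rangle\ge\kappa_3\|x^k-z^k\|^2,$$ where $\kappa_3=(1-\beta)\big(1-\frac{Lh_k}{4}\big)+\beta(1-\nu)>0$.
   Context: $X^*=\{x:\nabla f(x)=0\}$ (the set of minimizers of the convex $f$). Algorithm 3: parameters $0<\mu<\nu<1$, $0<\underline{h}<1\le\gamma_0^0\le\overline{h}<\frac4L$, $0\le\beta\le1$, $\theta\in(0,1)$, $\tau>1$, $\eta\in(0,2)$, starting point $x^0$; run while $\nabla f(x^k)\neq0$. At iteration $k$: for $\gamma>0$ let $z^k(\gamma)=x^k-\gamma\nabla f(x^k)$ and $r_k(\gamma)=\gamma\|\nabla f(z^k(\gamma))-\nabla f(x^k)\|/\|z^k(\gamma)-x^k\|$; starting from $\gamma_0^k$, while $r_k(\gamma_l^k)>\nu$ set $\gamma_{l+1}^k=\gamma_l^k\theta\min\{1,1/r_k(\gamma_l^k)\}$; let $h_k$ be the first $\gamma_l^k$ with $r_k(\gamma_l^k)\le\nu$.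 Then $z^k=x^k-h_k\nabla f(x^k)$ and $x^{k+1}=x^k-\eta\alpha_kh_k\big(\nabla f(x^k)-\beta(\nabla f(x^k)-\nabla f(z^k))\big)$ with $$\alpha_k=\frac{(1-\beta)\left(1-\frac{Lh_k}{4}\right)\|x^k-z^k\|^2+\beta\langle x^k-z^k,h_k\nabla f(z^k)\rangle}{h_k^2\|\nabla f(x^k)-\beta(\nabla f(x^k)-\nabla f(z^k))\|^2};$$ finally $\gamma_0^{k+1}=\mathbf{P}_{[\underline{h},\overline{h}]}(\tau h_k)$ if $r_k(h_k)\le\mu$, else $\gamma_0^{k+1}=\mathbf{P}_{[\underline{h},\overline{h}]}(h_k)$, where $\mathbf{P}_{[a,b]}$ is projection onto $[a,b]$. *)

(* Defs.v *)
From HB Require Import structures.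
From mathcomp Require Import all_boot all_order all_algebra.
From mathcomp Require Import all_classical all_reals all_analysis.
Set Implicit Arguments. Unset Strict Implicit. Unset Printing Implicit Defensive.
Import Order.TTheory GRing.Theory Num.Theory.
Import numFieldNormedType.Exports.
Local Open Scope ring_scope.

Section Defs.
Variables (R : realType) (n : nat).
Implicit Types (u v x : 'rV[R]_n).

Definition dot u v : R := \sum_(i < n) u ord0 i * v ord0 i.
Definition enorm u : R := Num.sqrt (dot u u).

Definition convex_fun (f : 'rV[R]_n -> R) :=
  forall x y (a : R), 0 <= a <= 1 ->
    f (a *: x + (1 - a) *: y) <= a * f x + (1 - a) * f y.

Definition is_gradient (f : 'rV[R]_n -> R) (g : 'rV[R]_n -> 'rV[R]_n) :=
  forall x, differentiable f x /\ forall v, 'D_v f x = dot (g x) v.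

Definition lipschitz_grad (g : 'rV[R]_n -> 'rV[R]_n) (L : R) :=
  forall x y, enorm (g x - g y) <= L * enorm (x - y).

Definition zk (g : 'rV[R]_n -> 'rV[R]_n) x (gam : R) := x - gam *: g x.
Definition rk (g : 'rV[R]_n -> 'rV[R]_n) x (gam : R) : R :=
  gam * enorm (g (zk g x gam) - g x) / enorm (zk g x gam - x).

Fixpoint gam_seq (g : 'rV[R]_n -> 'rV[R]_n) x (theta gam0 : R) (l : nat) : R :=
  match l with
  | O => gam0
  | S l' => let c := gam_seq g x theta gam0 l' in
            c * theta * Num.min 1 (1 / rk g x c)
  end.

Definition proj_int (a b t : R) : R := Num.max a (Num.min b t).

Definition alg3 (g : 'rV[R]_n -> 'rV[R]_n) (L mu nu hlo hhi beta theta tau eta : R)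
  (x0 : 'rV[R]_n) (x z : nat -> 'rV[R]_n) (h gamma0 : nat -> R) : Prop :=
  x 0%N = x0 /\
  forall k : nat, (forall j : nat, (j <= k)%N -> g (x j) != 0) ->
    [/\ exists l : nat,
          [/\ rk g (x k) (gam_seq g (x k) theta (gamma0 k) l) <= nu,
              forall l' : nat, (l' < l)%N ->
                 rk g (x k) (gam_seq g (x k) theta (gamma0 k) l') > nu &
              h k = gam_seq g (x k) theta (gamma0 k) l],
        z k = x k - h k *: g (x k),
        let d := g (x k) - beta *: (g (x k) - g (z k)) in
        let alpha :=
          ((1 - beta) * (1 - L * h k / 4) * dot (x k - z k) (x k - z k)
           + beta * dot (x k - z k) (h k *: g (z k)))
          / (h k ^+ 2 * dot d d) in
        x k.+1 = x k - (eta * alpha * h k) *: d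
      & gamma0 k.+1 = if rk g (x k) (h k) <= mu
                      then proj_int hlo hhi (tau * h k)
                      else proj_int hlo hhi (h k)].

End Defs.

(* Main.v *)
Require Import Defs.
From HB Require Import structures.
From mathcomp Require Import all_boot all_order all_algebra.
From mathcomp Require Import all_classical all_reals all_analysis.
From mathcomp Require Import ring lra.
Set Implicit Arguments. Unset Strict Implicit. Unset Printing Implicit Defensive.
Import Order.TTheory GRing.Theory Num.Theory.
Import numFieldNormedType.Exports.
Local Open Scope classical_set_scope.
Local Open Scope ring_scope.

Section DotLemmas.
Variables (R : realType) (n : nat).
Implicit Types (u v w : 'rV[R]_n).

Lemma dotC u v : dot u v = dot v u.
Proof. by rewrite /dot; apply: eq_bigr => i _; rewrite mulrC. Qed.
Lemma dotDl u v w : dot (u + v) w = dot u w + dot v w.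
Proof. by rewrite /dot -big_split; apply: eq_bigr => i _; rewrite mxE mulrDl. Qed.
Lemma dotZl (a : R) u v : dot (a *: u) v = a * dot u v.
Proof. by rewrite /dot mulr_sumr; apply: eq_bigr => i _; rewrite mxE mulrA. Qed.
Lemma dotNl u v : dot (- u) v = - dot u v.
Proof. by rewrite -scaleN1r dotZl mulN1r. Qed.
Lemma dotBl u v w : dot (u - v) w = dot u w - dot v w.
Proof. by rewrite dotDl dotNl. Qed.
Lemma dotDr u v w : dot w (u + v) = dot w u + dot w v.
Proof. by rewrite dotC dotDl !(dotC w). Qed.
Lemma dotZr (a : R) u v : dot v (a *: u) = a * dot v u.
Proof. by rewrite dotC dotZl dotC. Qed.
Lemma dotNr u v : dot v (- u) = - dot v u.
Proof. by rewrite dotC dotNl dotC. Qed.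
Lemma dotBr u v w : dot w (u - v) = dot w u - dot w v.
Proof. by rewrite dotDr dotNr. Qed.
Lemma dot0l v : dot 0 v = 0.
Proof. by rewrite -(scale0r 0) dotZl mul0r. Qed.
Lemma dot_ge0 u : 0 <= dot u u.
Proof. by apply: sumr_ge0 => i _; rewrite -expr2 sqr_ge0. Qed.
Lemma dot_eq0 u : dot u u = 0 -> u = 0.
Proof.
move/eqP; rewrite psumr_eq0 => [/allP H|i _]; last by rewrite -expr2 sqr_ge0.
apply/rowP => i; have := H i (mem_index_enum i).
by rewrite /= mulf_eq0 orbb mxE => /eqP.
Qed.
Lemma enorm_sq u : enorm u ^+ 2 = dot u u.
Proof. by rewrite /enorm sqr_sqrtr // dot_ge0. Qed.
Lemma enorm_ge0 u : 0 <= enorm u.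
Proof. exact: sqrtr_ge0. Qed.
Lemma enormZ (a : R) u : enorm (a *: u) = `|a| * enorm u.
Proof. by rewrite /enorm dotZl dotZr mulrA -expr2 sqrtrM ?sqr_ge0 // sqrtr_sqr. Qed.
Lemma enormN u : enorm (- u) = enorm u.
Proof. by rewrite -scaleN1r enormZ normrN normr1 mul1r. Qed.
Lemma enorm_gt0 {u} : u != 0 -> 0 < enorm u.
Proof.
move=> u0; rewrite lt_def enorm_ge0 andbT; apply/negP => /eqP e.
have : dot u u = 0 by rewrite -enorm_sq e expr0n.
by move/dot_eq0; apply/eqP.
Qed.
Lemma CS u v : dot u v <= enorm u * enorm v.
Proof.
have [->|u0] := eqVneq u 0; first by rewrite dot0l mulr_ge0 // enorm_ge0.
have [->|v0] := eqVneq v 0; first by rewrite dotC dot0l mulr_ge0 // enorm_ge0.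
have a0 := enorm_gt0 u0; have b0 := enorm_gt0 v0.
have := dot_ge0 (enorm v *: u - enorm u *: v).
rewrite !(dotBl, dotBr, dotZl, dotZr) (dotC v u) -!enorm_sq.
set a := enorm u; set b := enorm v; set d := dot u v => H.
have ab0 : 0 < a * b by rewrite mulr_gt0.
nra.
Qed.
End DotLemmas.

Section Smooth.
Variables (R : realType) (n : nat) (f : 'rV[R]_n -> R) (g : 'rV[R]_n -> 'rV[R]_n).
Hypothesis Hg : is_gradient f g.

Lemma line_derive (y v : 'rV[R]_n) (t : R) :
  is_derive t 1 (fun s : R => f (s *: v + y)) (dot (g (t *: v + y)) v).
Proof.
have [df dD] := Hg (t *: v + y).
have der : derivable f (t *: v + y) v := diff_derivable (v:=v) df.
have E : (fun h : R => h^-1 *: (((fun s : R => f (s *: v + y)) \o shift t) (h *: 1)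
            - f (t *: v + y))) =
         (fun h : R => h^-1 *: ((f \o shift (t *: v + y)) (h *: v) - f (t *: v + y))).
  apply/funext => h /=; congr (_ *: (f _ - _)).
  by rewrite [h *: 1]mulr1 scalerDl addrA.
apply: DeriveDef; first by rewrite /derivable E.
by rewrite /derive E; exact: dD.
Qed.

Lemma grad_ineq (Hc : convex_fun f) (a b : 'rV[R]_n) :
  f a + dot (g a) (b - a) <= f b.
Proof.
have [df dD] := Hg a.
have der : derivable f a (b - a) := diff_derivable (v:=b - a) df.
rewrite -(dD (b - a)) addrC -lerBrDr.
move: der; rewrite /derivable /derive => der.
set q := (fun h : R => _) in der *.
have cr : q @ 0^'+ --> lim (q @ 0^').
  move=> A /der /nbhs_ballP [e e0 eA].
  by exists e => //= y ye /gt_eqF/negbT/eA; exact.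
apply: (cvgr_to_le cr).
near=> h.
have h0 : 0 < h by near: h; exact: nbhs_right_gt.
have h1 : h <= 1 by near: h; apply: nbhs_right_le; exact: ltr01.
rewrite /q /=.
have := Hc b a h; rewrite h1 (ltW h0) => /(_ isT).
have -> : h *: b + (1 - h) *: a = h *: (b - a) + a.
  by rewrite scalerBr scalerBl scale1r addrA addrAC.
move=> Hle.
rewrite ler_pdivrMl // mulrBr.
lra.
Unshelve. all: by end_near.
Qed.
Variable L : R.
Hypothesis Hl : lipschitz_grad g L.

Lemma descent (y v : 'rV[R]_n) :
  f (v + y) <= f y + dot (g y) v + L / 2 * dot v v.
Proof.
set c := dot (g y) v; set k := L / 2 * dot v v.
pose psi := (fun s : R => f (s *: v + y)) - (c \*: id) - (k \*: (id * id)).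
have D (t : R) : is_derive t (1:R) psi (dot (g (t *: v + y)) v - c *: 1 - k *: (t *: 1 + t *: 1)).
  apply: is_deriveB; first apply: is_deriveB; first exact: line_derive.
have dle (t : R) : 0 <= t -> dot (g (t *: v + y)) v - c%:A - k *: (t%:A + t%:A) <= 0.
  move=> t0.
  have h1 : dot (g (t *: v + y)) v - c = dot (g (t *: v + y) - g y) v by rewrite dotBl.
  have h2 := CS (g (t *: v + y) - g y) v.
  have h3 := Hl (t *: v + y) y.
  rewrite addrK enormZ ger0_norm // in h3.
  have h4 : enorm (g (t *: v + y) - g y) * enorm v <= L * (t * enorm v) * enorm v.
    by rewrite ler_wpM2r // enorm_ge0.
  have h5 := enorm_sq v.
  rewrite /k -h5 /GRing.scale /=.
  rewrite !mulr1.
  nra.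
have H := @ler0_derive1_le_cc _ psi 0 1.
have H1 : psi 1 <= psi 0.
  apply: (H _ _ _ 1 0); rewrite ?in_itv /= ?ler01 ?lexx //.
  - move=> x; rewrite in_itv /= => /andP [x0 _].
    by rewrite derive1E derive_val dle // ltW.
  - by apply: derivable_within_continuous => x _.
move: H1; rewrite /psi !fctE /= scale1r scale0r add0r.
rewrite /GRing.scale /= !mulr1 !mulr0 !subr0; lra.
Qed.
Hypothesis Hc : convex_fun f.
Hypothesis L0 : 0 < L.

Lemma L3 (a b : 'rV[R]_n) :
  f a + dot (g a) (b - a) + (2 * L)^-1 * dot (g b - g a) (g b - g a) <= f b.
Proof.
set D := g b - g a; set v := - (L^-1) *: D; set w := v + b.
have e1 := grad_ineq Hc a w.
have e2 := descent b v.
have ew : w - a = (b - a) + v by rewrite /w [v + b]addrC addrAC.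
rewrite ew dotDr in e1.
have eg : g b = g a + D by rewrite /D addrC subrK.
rewrite eg dotDl in e2.
rewrite /v !(dotZl, dotZr) in e1 e2.
set q := dot D D in e1 e2 *.
set e := dot (g a) D in e1 e2 *.
have E1 : L / 2 * (- L^-1 * (- L^-1 * q)) = L^-1 / 2 * q.
  by field; rewrite gt_eqF.
have E2 : (2 * L)^-1 = L^-1 / 2 by rewrite invfM mulrC.
rewrite E1 in e2; rewrite E2.
have : f w <= f b + (- L^-1 * e + - L^-1 * q) + L^-1 / 2 * q by [].
lra.
Qed.

Lemma coco (a b : 'rV[R]_n) :
  L^-1 * dot (g b - g a) (g b - g a) <= dot (g b - g a) (b - a).
Proof.
have e1 := L3 a b; have e2 := L3 b a.
have eq : dot (g a - g b) (g a - g b) = dot (g b - g a) (g b - g a).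
  by rewrite -opprB dotNl dotNr opprK.
rewrite eq in e2.
have e3 : dot (g b) (a - b) = - dot (g b) (b - a) by rewrite -opprB dotNr.
rewrite e3 in e2.
have E2 : (2 * L)^-1 = L^-1 / 2 by rewrite invfM mulrC.
rewrite E2 in e1 e2.
rewrite [dot _ (b - a)]dotBl.
lra.
Qed.
End Smooth.

Lemma proj_bounds (R : realType) (a b t : R) : a <= b ->
  a <= proj_int a b t /\ proj_int a b t <= b.
Proof.
move=> ab; rewrite /proj_int; split; first by rewrite le_max lexx.
by rewrite ge_max ab /= ge_min lexx.
Qed.

Lemma gam_bounds (R : realType) (n : nat) (g : 'rV[R]_n -> 'rV[R]_n) x
  (theta gam0 nu : R) (l : nat) :
  0 < gam0 -> 0 < nu -> 0 < theta -> theta < 1 ->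
  (forall l', (l' < l)%N -> nu < rk g x (gam_seq g x theta gam0 l')) ->
  0 < gam_seq g x theta gam0 l <= gam0.
Proof.
move=> g0 nu0 th0 th1; elim: l => [|l IH] H; first by rewrite /= g0 lexx.
have /andP [p q] := IH (fun l' hl => H l' (leqW hl)).
have r := H l (ltnSn l).
rewrite /=; set c := gam_seq g x theta gam0 l in p q r *.
set m := Num.min 1 (1 / rk g x c).
have m0 : 0 < m by rewrite lt_min ltr01 /= divr_gt0 // (lt_trans nu0 r).
have m1 : m <= 1 by rewrite ge_min lexx.
apply/andP; split; first by rewrite !mulr_gt0.
apply: le_trans q; rewrite -mulrA ger_pMr //.
by rewrite -[1]mulr1 ler_pM // ?ltW.
Qed.

Theorem lemma6 (R : realType) (n : nat) (f : 'rV[R]_n -> R)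
  (g : 'rV[R]_n -> 'rV[R]_n) (L : R)
  (mu nu hlo hhi beta theta tau eta : R) (x0 : 'rV[R]_n)
  (x z : nat -> 'rV[R]_n) (h gamma0 : nat -> R) :
  convex_fun f -> is_gradient f g -> 0 < L -> lipschitz_grad g L ->
  (exists xs : 'rV[R]_n, g xs = 0) ->
  0 < mu -> mu < nu -> nu < 1 ->
  0 < hlo -> hlo < 1 -> 1 <= gamma0 0%N -> gamma0 0%N <= hhi -> hhi < 4 / L ->
  0 <= beta -> beta <= 1 -> 0 < theta -> theta < 1 -> 1 < tau ->
  0 < eta -> eta < 2 ->
  alg3 g L mu nu hlo hhi beta theta tau eta x0 x z h gamma0 ->
  forall (xs : 'rV[R]_n), g xs = 0 ->
  forall k : nat, (forall j : nat, (j <= k)%N -> g (x j) != 0) ->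
    let d := h k *: (g (x k) - beta *: (g (x k) - g (z k))) in
    let kappa3 := (1 - beta) * (1 - L * h k / 4) + beta * (1 - nu) in
    [/\ dot (x k - xs) d >=
          (1 - beta) * (1 - L * h k / 4) * enorm (x k - z k) ^+ 2
          + beta * dot (x k - z k) (h k *: g (z k)),
        (1 - beta) * (1 - L * h k / 4) * enorm (x k - z k) ^+ 2
          + beta * dot (x k - z k) (h k *: g (z k))
          >= kappa3 * enorm (x k - z k) ^+ 2
      & 0 < kappa3].
Proof.
move=> Hc Hg L0 Hl _ mu0 munu nu1 hlo0 hlo1 g00 g0h hhiL b0 b1 th0 th1 tau1
  eta0 eta2 [_ Halg] xs gxs k Hk d kappa3.
have nu0 : 0 < nu by apply: lt_trans munu.
have hlohhi : hlo <= hhi by apply: le_trans g0h; apply: le_trans g00; apply: ltW.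
have [G0p G0h] : 0 < gamma0 k /\ gamma0 k <= hhi.
  case: k Hk {d kappa3} => [|k] Hk; first by split => //; apply: lt_le_trans ltr01 g00.
  have [_ _ _ e] := Halg k (fun j hj => Hk j (leqW hj)).
  rewrite e; case: ifP => _;
    [have [p q] := proj_bounds (tau * h k) hlohhi | have [p q] := proj_bounds (h k) hlohhi];
    split => //; exact: lt_le_trans hlo0 p.
have [[l [Hrl Hlt Hh]] ez _ _] := Halg k Hk.
have /andP [H0 HG0] := gam_bounds G0p nu0 th0 th1 Hlt.
rewrite -Hh in H0 HG0 Hrl.
have Gn0 := Hk k (leqnn k).
rewrite /d /kappa3 {d kappa3}.
set X := x k in ez Hrl Gn0 *; set Z := z k in ez *; set H := h k in ez Hrl H0 HG0 *.
set G := g X in ez Hrl Gn0 *; set GZ := g Z.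
have exz : X - Z = H *: G by rewrite ez opprB addrC subrK.
have ezk : zk g X H = Z by [].
have eG := enorm_gt0 Gn0.
have Hr : H * enorm (GZ - G) <= nu * (H * enorm G).
  move: Hrl; rewrite /rk ezk -/GZ -/G.
  have -> : Z - X = - (H *: G) by rewrite -exz opprB.
  rewrite enormN enormZ (ger0_norm (ltW H0)).
  by rewrite ler_pdivrMr ?mulr_gt0.
have HL : L * H < 4.
  by rewrite mulrC -ltr_pdivlMr //; apply: le_lt_trans hhiL; apply: le_trans G0h.
have F1 := coco Hg Hl Hc L0 xs X.
rewrite gxs subr0 -/G dotC in F1.
have F2 := coco Hg Hl Hc L0 xs Z.
rewrite gxs subr0 -/GZ in F2.
have F2' : 0 <= dot GZ (Z - xs).
  by apply: le_trans F2; rewrite mulr_ge0 ?dot_ge0 // invr_ge0 ltW.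
have exs : X - xs = (Z - xs) + H *: G by rewrite -exz [RHS]addrC addrA subrK.
rewrite exz enorm_sq !(dotZl, dotZr, dotBr).
rewrite [in dot (X - xs) GZ]exs [dot (_ + _) GZ]dotDl dotZl (dotC (Z - xs) GZ).
set q := dot G G in F1 *; set P := dot G GZ; set A := dot (X - xs) G in F1 *.
set B := dot GZ (Z - xs) in F2' *.
have q0 : 0 <= q by apply: dot_ge0.
have Lli : L * L^-1 = 1 by rewrite mulfV // gt_eqF.
have K : H * (1 - L * H / 4) <= L^-1.
  have := mulr_ge0 (ltW L0) (sqr_ge0 (L^-1 - H / 2)).
  have : L * L^-1 * L^-1 = L^-1 by rewrite Lli mul1r.
  nra.
have a0 : 0 < 1 - L * H / 4 by lra.
have s1 : H * (1 - L * H / 4) * q <= A.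
  by apply: le_trans F1; rewrite ler_wpM2r.
have bH : 0 <= (1 - beta) * H by rewrite mulr_ge0 ?subr_ge0 // ltW.
have s2 := ler_wpM2l bH s1.
have s3 : 0 <= beta * H * B by rewrite !mulr_ge0 // ltW.
have eP : P = q + dot G (GZ - G) by rewrite dotBr /P /q addrC subrK.
have t2 : - dot G (GZ - G) <= enorm G * enorm (GZ - G).
  by rewrite -dotNl -(enormN G) CS.
have t1 : H * enorm G * (H * enorm (GZ - G)) <= H * enorm G * (nu * (H * enorm G)).
  by rewrite ler_wpM2l // mulr_ge0 ?enorm_ge0 // ltW.
have eq : enorm G ^+ 2 = q by rewrite enorm_sq.
have HH0 : 0 <= H * H by rewrite mulr_ge0 // ltW.
have t3 := ler_wpM2l HH0 t2.
have t4 : (1 - nu) * (H * (H * q)) <= H * (H * P).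
  rewrite eP -eq. nra.
have t5 := ler_wpM2l b0 t4.
split.
- lra.
- lra.
- have u1 : 0 <= (1 - beta) * (1 - L * H / 4) by apply: mulr_ge0; [rewrite subr_ge0 | exact: ltW].
  have [bp|bn] := ltP 0 beta.
    have : 0 < beta * (1 - nu) by rewrite mulr_gt0 // subr_gt0.
    lra.
  have -> : beta = 0 by apply/eqP; rewrite eq_le bn b0.
  by rewrite subr0 mul1r mul0r addr0.
Qed.
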